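(* Let $D\subset\mathbb R^N$ be open and convex and $w:D\to\mathbb R$ convex. Suppose that for some $x_0\in D$, $$w(x)=w(x_0)+\langle p_0,x-x_0\rangle+\tfrac12\langle A(x-x_0),x-x_0\rangle+o(\|x-x_0\|^2)$$ for some $p_0\in\mathbb R^N$ and a symmetric $N\times N$ matrix $A$. Let $f$ be a continuously differentiable real function on a neighbourhood of $p_0$. Then $$\lim_{x\to x_0}\ \sup_{p\in\partial w(x)}\frac{|f(p)-f(p_0)-\langle\nabla f(p_0),A(x-x_0)\rangle|}{\|x-x_0\|}=0,$$ where $\partial w(x)$ is the subdifferential of $w$ at $x$. *)

(* Defs.v *)
From HB Require Import structures.
From mathcomp Require Import all_boot all_order all_algebra.
From mathcomp Require Import reals.
Set Implicit Arguments. Unset Strict Implicit. Unset Printing Implicit Defensive.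
Import Order.TTheory GRing.Theory Num.Theory.
Local Open Scope ring_scope.

Section Defs.
Variables (R : realType) (N : nat).
Notation V := 'cV[R]_N.

Definition dotv (u v : V) : R := \sum_(i < N) u i 0 * v i 0.
Definition normv (u : V) : R := Num.sqrt (dotv u u).

Definition open_set (D : V -> Prop) : Prop :=
  forall x, D x -> exists r : R, 0 < r /\ forall y, normv (y - x) < r -> D y.

Definition convex_set (D : V -> Prop) : Prop :=
  forall x y (t : R), D x -> D y -> 0 <= t <= 1 -> D ((1 - t) *: x + t *: y).

Definition convex_on (D : V -> Prop) (w : V -> R) : Prop :=
  forall x y (t : R), D x -> D y -> 0 <= t <= 1 ->
    w ((1 - t) *: x + t *: y) <= (1 - t) * w x + t * w y.

Definition subdiff (D : V -> Prop) (w : V -> R) (x p : V) : Prop :=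
  D x /\ forall y, D y -> w x + dotv p (y - x) <= w y.

Definition second_order_expansion (D : V -> Prop) (w : V -> R) (x0 p0 : V)
    (A : 'M[R]_N) : Prop :=
  forall eps : R, 0 < eps -> exists delta : R, 0 < delta /\
    forall x, D x -> normv (x - x0) < delta ->
      `| w x - w x0 - dotv p0 (x - x0) - 2^-1 * dotv (A *m (x - x0)) (x - x0) |
        <= eps * normv (x - x0) ^+ 2.

Definition has_gradient (f : V -> R) (p g : V) : Prop :=
  forall eps : R, 0 < eps -> exists delta : R, 0 < delta /\
    forall q, normv (q - p) < delta ->
      `| f q - f p - dotv g (q - p) | <= eps * normv (q - p).

Definition C1_on_ball (f : V -> R) (grad : V -> V) (p0 : V) (r : R) : Prop :=
  0 < r /\
  (forall p, normv (p - p0) < r -> has_gradient f p (grad p)) /\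
  (forall p, normv (p - p0) < r ->
     forall eps : R, 0 < eps -> exists delta : R, 0 < delta /\
       forall q, normv (q - p0) < r -> normv (q - p) < delta ->
         normv (grad q - grad p) < eps).

End Defs.

(* Main.v *)
Require Import Defs.
From HB Require Import structures.
From mathcomp Require Import all_boot all_order all_algebra.
From mathcomp Require Import reals.
From mathcomp Require Import ring lra.
Import Order.TTheory GRing.Theory Num.Theory.
Local Open Scope ring_scope.

Set Implicit Arguments. Unset Strict Implicit.
Section Aux.
Variables (R : realType) (N : nat).
Implicit Types (u v z : 'cV[R]_N).

Lemma dotvC u v : dotv u v = dotv v u.
Proof. by apply: eq_bigr => i _; rewrite mulrC. Qed.

Lemma dotvDl u v z : dotv (u + v) z = dotv u z + dotv v z.
Proof. by rewrite /dotv -big_split; apply: eq_bigr => i _; rewrite mxE mulrDl. Qed.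

Lemma dotvZl a u v : dotv (a *: u) v = a * dotv u v.
Proof. by rewrite /dotv mulr_sumr; apply: eq_bigr => i _; rewrite mxE mulrA. Qed.

Lemma dotvNl u v : dotv (- u) v = - dotv u v.
Proof. by rewrite -scaleN1r dotvZl mulN1r. Qed.

Lemma dotvBl u v z : dotv (u - v) z = dotv u z - dotv v z.
Proof. by rewrite dotvDl dotvNl. Qed.

Lemma dotvDr u v z : dotv z (u + v) = dotv z u + dotv z v.
Proof. by rewrite dotvC dotvDl !(dotvC z). Qed.

Lemma dotvZr a u v : dotv v (a *: u) = a * dotv v u.
Proof. by rewrite dotvC dotvZl dotvC. Qed.

Lemma dotvBr u v z : dotv z (u - v) = dotv z u - dotv z v.
Proof. by rewrite dotvC dotvBl !(dotvC z). Qed.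

Lemma dotv_ge0 u : 0 <= dotv u u.
Proof. by apply: sumr_ge0 => i _; rewrite -expr2 sqr_ge0. Qed.

Lemma dotv_eq0 u v : dotv u u = 0 -> dotv u v = 0.
Proof.
move=> H.
have H' : forall i, true -> u i 0 * u i 0 = 0.
  by apply: psumr_eq0P H => i _; rewrite -expr2 sqr_ge0.
rewrite /dotv big1 // => i _.
by move/eqP: (H' i isT); rewrite mulf_eq0 orbb => /eqP ->; rewrite mul0r.
Qed.

Lemma dotv_mx (A : 'M[R]_N) u v : dotv (A *m u) v = dotv u (A^T *m v).
Proof.
rewrite /dotv (eq_bigr (fun i => \sum_j A i j * u j 0 * v i 0)); last first.
  by move=> i _; rewrite mxE big_distrl.
rewrite exchange_big /=; apply: eq_bigr => j _; rewrite mxE big_distrr /=.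
by apply: eq_bigr => i _; rewrite !mxE; ring.
Qed.

Lemma normv_ge0 u : 0 <= normv u.
Proof. exact: sqrtr_ge0. Qed.

Lemma normv_sq u : normv u ^+ 2 = dotv u u.
Proof. exact: sqr_sqrtr (dotv_ge0 u). Qed.

Lemma cs u v : dotv u v <= normv u * normv v.
Proof.
set a := normv v; set b := normv u.
have ha : dotv v v = a ^+ 2 by rewrite normv_sq.
have hb : dotv u u = b ^+ 2 by rewrite normv_sq.
have ga : 0 <= a := normv_ge0 v. have gb : 0 <= b := normv_ge0 u.
have H : 0 <= dotv (a *: u - b *: v) (a *: u - b *: v) := dotv_ge0 _.
have evu : dotv v u = dotv u v := dotvC v u.
rewrite dotvBl !dotvBr !dotvZl !dotvZr in H.
rewrite evu in H.
rewrite ha hb in H.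
have [ab0|ab0] : a * b = 0 \/ 0 < a * b.
  by rewrite lt_def mulr_ge0 // andbT; case: eqP; [left|right].
- move/eqP: ab0; rewrite mulf_eq0 => /orP [] /eqP a0.
  + by rewrite -evu dotv_eq0 ?ha ?a0 ?expr2 ?mul0r ?mulr0.
  + by rewrite dotv_eq0 ?hb ?a0 ?expr2 ?mul0r ?mulr0.
- nra.
Qed.

Lemma normvN u : normv (- u) = normv u.
Proof.
have e : dotv (- u) (- u) = dotv u u.
  by rewrite dotvNl -scaleN1r dotvZr mulN1r opprK.
by rewrite /normv e.
Qed.

Lemma cs_abs u v : `|dotv u v| <= normv u * normv v.
Proof.
rewrite ler_norml cs andbT.
by rewrite lerNl -dotvNl -(normvN u) cs.
Qed.

Lemma le_sq (a b : R) : 0 <= a -> 0 <= b -> a ^+ 2 <= b ^+ 2 -> a <= b.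
Proof. move=> *; nra. Qed.

Lemma normvD u v : normv (u + v) <= normv u + normv v.
Proof.
apply: le_sq; rewrite ?addr_ge0 ?normv_ge0 //.
rewrite normv_sq dotvDl !dotvDr (dotvC v u) -!normv_sq.
have := cs u v; nra.
Qed.

Lemma normvZ a u : normv (a *: u) = `|a| * normv u.
Proof.
by rewrite /normv dotvZl dotvZr mulrA -expr2 sqrtrM ?sqr_ge0 // sqrtr_sqr.
Qed.

Lemma mx_bound (A : 'M[R]_N) :
  exists K, 0 <= K /\ forall z, normv (A *m z) <= K * normv z.
Proof.
pose rw i := \col_j A i j : 'cV[R]_N.
pose S := \sum_i dotv (rw i) (rw i).
have S0 : 0 <= S by apply: sumr_ge0 => i _; exact: dotv_ge0.
exists (Num.sqrt S); split; first exact: sqrtr_ge0.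
move=> z.
have e i : (A *m z) i 0 = dotv (rw i) z.
  by rewrite mxE /dotv; apply: eq_bigr => j _; rewrite mxE.
apply: le_sq; rewrite ?mulr_ge0 ?sqrtr_ge0 ?normv_ge0 //.
rewrite normv_sq exprMn sqr_sqrtr // normv_sq {1}/dotv /S mulr_suml.
apply: ler_sum => i _; rewrite e.
have := cs_abs (rw i) z; rewrite -!normv_sq.
have := normr_ge0 (dotv (rw i) z).
have := real_normK (num_real (dotv (rw i) z)).
nra.
Qed.

End Aux.

Theorem lemma8 (R : realType) (N : nat) (D : 'cV[R]_N -> Prop)
    (w : 'cV[R]_N -> R) (x0 p0 : 'cV[R]_N) (A : 'M[R]_N)
    (f : 'cV[R]_N -> R) (grad : 'cV[R]_N -> 'cV[R]_N) (r : R) :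
  open_set D -> convex_set D -> convex_on D w -> D x0 ->
  A^T = A ->
  second_order_expansion D w x0 p0 A ->
  C1_on_ball f grad p0 r ->
  (* lim_{x -> x0} sup_{p in \partial w(x)}
       |f(p) - f(p0) - <\nabla f(p0), A(x-x0)>| / ||x-x0|| = 0 *)
  forall eps : R, 0 < eps -> exists delta : R, 0 < delta /\
    forall x, D x -> 0 < normv (x - x0) < delta ->
      forall p, subdiff D w x p ->
        `| f p - f p0 - dotv (grad p0) (A *m (x - x0)) | / normv (x - x0) <= eps.
Proof.
move=> Dopen _ _ Dx0 AT Hexp [r0 [Hgrad _]] eps eps0.
have [K [K0 HK]] := mx_bound A.
have symA (z h : 'cV[R]_N) : dotv (A *m z) h = dotv (A *m h) z by rewrite dotv_mx AT dotvC.
have stepA : forall eta, 0 < eta -> exists d1, 0 < d1 /\ forall x p, D x ->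
    0 < normv (x - x0) -> normv (x - x0) < d1 -> subdiff D w x p ->
    normv (p - p0 - A *m (x - x0)) <= eta * normv (x - x0).
  move=> eta eta0.
  have Ke0 : 0 < K + eta by rewrite ltr_wpDl.
  pose lam := eta / (K + eta).
  have lam0 : 0 < lam by rewrite divr_gt0.
  have lam1 : lam <= 1 by rewrite ler_pdivrMr // mul1r lerDr.
  have Klam : K * lam <= eta.
    by rewrite /lam mulrA ler_pdivrMr //; nra.
  pose th := lam * eta / 10.
  have th0 : 0 < th by rewrite /th divr_gt0 // mulr_gt0.
  have [de [de0 Hde]] := Hexp th th0.
  have [rho [rho0 Hrho]] := Dopen x0 Dx0.
  exists (Num.min de rho / 2); split.
    by rewrite divr_gt0 // lt_min de0 rho0.
  move=> x p Dx t0 tlt [_ Hsub].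
  move: tlt; rewrite ltr_pdivlMr // lt_min => /andP[t2de t2rho].
  set h := x - x0 in t0 t2de t2rho *.
  set t := normv h in t0 t2de t2rho *.
  set q := p - p0 - A *m h.
  have [q0|qpos] : normv q = 0 \/ 0 < normv q.
    by rewrite lt_def normv_ge0 andbT; case: eqP; [left|right].
    by rewrite q0 mulr_ge0 // ltW.
  pose c := lam * t / normv q.
  have c0 : 0 <= c by rewrite /c divr_ge0 ?normv_ge0 // mulr_ge0 // ltW.
  pose z := c *: q.
  have nz : normv z = lam * t.
    by rewrite normvZ ger0_norm // divfK // gt_eqF.
  have qz : dotv q z = lam * t * normv q.
    by rewrite dotvZr -normv_sq /c expr2 mulrA divfK // gt_eqF.
  pose y := x + z.
  have yx : y - x = z by rewrite /y addrAC subrr add0r.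
  have yx0 : y - x0 = h + z by rewrite /y /h addrAC.
  have nyx0 : normv (y - x0) <= 2 * t.
    rewrite yx0; apply: le_trans (normvD _ _) _; rewrite nz -/t; nra.
  have Dy : D y by apply: Hrho; apply: le_lt_trans nyx0 _; rewrite mulrC.
  have Hs := Hsub y Dy; rewrite yx in Hs.
  have tde : t < de by nra.
  have E1 := Hde x Dx tde; rewrite -/h -/t in E1.
  have yde : normv (y - x0) < de by apply: le_lt_trans nyx0 _; rewrite mulrC.
  have E2 := Hde y Dy yde.
  have n2 : normv (y - x0) ^+ 2 <= 4 * t ^+ 2.
    have := normv_ge0 (y - x0); nra.
  rewrite yx0 in E2 n2.
  rewrite mulmxDr (dotvDr h z p0) (dotvDl (A *m h) (A *m z)) (dotvDr h z (A *m h)) (dotvDr h z (A *m z)) (symA z h) in E2.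
  have eb : dotv (A *m z) z <= K * (lam * t) ^+ 2.
    apply: le_trans (ler_norm _) _; apply: le_trans (cs_abs _ _) _.
    rewrite nz expr2 mulrA; apply: ler_wpM2r; first by rewrite mulr_ge0 // ltW.
    by rewrite -nz HK.
  have F : K * (lam * t) ^+ 2 <= eta * lam * t ^+ 2.
    rewrite exprMn mulrA; apply: ler_wpM2r; first by rewrite sqr_ge0.
    by rewrite expr2; nra.
  have qe : dotv q z = dotv p z - dotv p0 z - dotv (A *m h) z by rewrite /q !dotvBl.
  have the : th = lam * eta / 10 by [].
  move: E1 E2; rewrite !ler_norml => /andP[E1 E1'] /andP[E2 E2'].
  have tpos : 0 < lam * t by rewrite mulr_gt0.
  rewrite -(ler_pM2l tpos) -qz qe.
  have E2b : th * normv (h + z) ^+ 2 <= th * (4 * t ^+ 2).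
    by apply: ler_wpM2l => //; apply: ltW.
  have tht : th * t ^+ 2 = lam * eta * t ^+ 2 / 10 by rewrite the; field.
  lra.
pose G := normv (grad p0).
pose eta := eps / (2 * (G + 1)).
have G0 : 0 <= G by exact: normv_ge0.
have eta0 : 0 < eta by rewrite divr_gt0 // mulr_gt0 // ltr_wpDl.
have [d1 [d10 Hd1]] := stepA eta eta0.
have Ke0 : 0 < K + eta by rewrite ltr_wpDl.
pose eps' := eps / (2 * (K + eta)).
have eps'0 : 0 < eps' by rewrite divr_gt0 // mulr_gt0.
have n0 : normv (p0 - p0) < r.
  by rewrite subrr -(scale0r (0 : 'cV[R]_N)) normvZ normr0 mul0r.
have [d2 [d20 Hd2]] := Hgrad p0 n0 eps' eps'0.
exists (Num.min d1 (d2 / (K + eta))); split.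
  by rewrite lt_min d10 divr_gt0.
move=> x Dx /andP[t0]; rewrite lt_min => /andP[td1]; rewrite ltr_pdivlMr // => td2 p Hp.
have Hq := Hd1 x p Dx t0 td1 Hp.
set h := x - x0 in t0 td1 td2 Hq *.
set t := normv h in t0 td1 td2 Hq *.
set q := p - p0 - A *m h in Hq.
have pq : p - p0 = q + A *m h by rewrite /q subrK.
have hpp : normv (p - p0) <= (K + eta) * t.
  rewrite pq; apply: le_trans (normvD _ _) _; have := HK h; rewrite -/t; nra.
have pd2 : normv (p - p0) < d2 by apply: le_lt_trans hpp _; rewrite mulrC.
have Hf := Hd2 p pd2.
have e1 : f p - f p0 - dotv (grad p0) (A *m h) =
   (f p - f p0 - dotv (grad p0) (p - p0)) + dotv (grad p0) q.
  by rewrite pq dotvDr; ring.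
rewrite ler_pdivrMr // e1.
apply: le_trans (ler_normD _ _) _.
have gq := cs_abs (grad p0) q; rewrite -/G in gq.
have H1 : eps' * normv (p - p0) <= eps' * ((K + eta) * t) by apply: ler_wpM2l => //; apply: ltW.
have H2 : eps' * ((K + eta) * t) = eps / 2 * t.
  by rewrite /eps' mulrA invfM mulrA -[_ / 2 / _ * _]mulrA mulVf ?mulr1 // gt_eqF.
have H3 : G * normv q <= G * (eta * t) by apply: ler_wpM2l.
have H4 : G * eta <= eps / 2.
  rewrite /eta mulrA ler_pdivrMr ?mulr_gt0 ?ltr_wpDl //.
  rewrite mulrC; nra.
have H5 : G * (eta * t) <= eps / 2 * t by rewrite mulrA; apply: ler_wpM2r => //; apply: ltW.
nra.
Qed.
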